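(* Let $X$ be a path-connected topological space with base point $x_0\in X$, and let $i_1,i_2\colon X\to X\times X$ be the inclusions $i_1(x)=(x,x_0)$ and $i_2(x)=(x_0,x)$. Then $\mathrm{D}(i_1,i_2)=\mathrm{cat}(X)$.
   Context: For continuous maps $f,g\colon X\to Y$ between topological spaces, the homotopic distance $\mathrm{D}(f,g)$ is the least integer $n\geq 0$ such that there is an open cover $\{U_0,\dots,U_n\}$ of $X$ with $f|_{U_j}\simeq g|_{U_j}$ (homotopic as maps $U_j\to Y$) for all $j$; if no such cover exists, $\mathrm{D}(f,g)=\infty$. For a path-connected space $X$, the (normalized) Lusternik–Schnirelmann category $\mathrm{cat}(X)$ is the least integer $n\geq 0$ such that $X$ can be covered by $n+1$ open sets $U$ whose inclusion $U\hookrightarrow X$ is null-homotopic. *)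

(* Defs.v *)
From HB Require Import structures.
From mathcomp Require Import all_boot all_order all_algebra.
From mathcomp Require Import all_classical all_reals all_analysis.
From mathcomp Require Import Rstruct Rstruct_topology.
Set Implicit Arguments. Unset Strict Implicit. Unset Printing Implicit Defensive.
Import Order.TTheory GRing.Theory Num.Theory.
Local Open Scope classical_set_scope.
Local Open Scope ring_scope.

Notation RR := Rdefinitions.R.

Definition unitI : set RR := [set t : RR | 0 <= t <= 1].

(* f|_U and g|_U are homotopic as maps U -> Y: there is a map
   H : U x [0,1] -> Y, continuous for the subspace topology of U x [0,1]
   inside X x R, with H(-,0) = f and H(-,1) = g on U. *)
Definition homotopic_on {X Y : topologicalType} (U : set X) (f g : X -> Y) :=
  exists H : X * RR -> Y,
    {within U `*` unitI, continuous H} /\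
    (forall x, U x -> H (x, 0) = f x /\ H (x, 1) = g x).

Definition path_connected (X : topologicalType) :=
  forall x y : X, exists p : RR -> X,
    {within unitI, continuous p} /\ p 0 = x /\ p 1 = y.

Definition open_cover_by {X : topologicalType} (n : nat) (P : set X -> Prop) :=
  exists U : nat -> set X,
    (forall j, (j <= n)%N -> open (U j) /\ P (U j)) /\
    (forall x, exists2 j, (j <= n)%N & U j x).

Definition incl_nullhomotopic {X : topologicalType} (U : set X) :=
  exists c : X, homotopic_on U id (cst c).

(* Least n with property P, or None (= infinity) if there is none. *)
Definition least_or_inf (P : nat -> Prop) : option nat :=
  match pselect (exists n, `[< P n >]) with
  | left h => Some (ex_minn h)
  | right _ => None
  end.

Definition hdist {X Y : topologicalType} (f g : X -> Y) : option nat :=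
  least_or_inf (fun n => open_cover_by n (fun U => homotopic_on U f g)).

(* Normalized LS category cat(X); None encodes infinity. *)
Definition LScat (X : topologicalType) : option nat :=
  least_or_inf (fun n => open_cover_by n (fun U : set X => incl_nullhomotopic U)).

(* Main.v *)
Require Import Defs.
From HB Require Import structures.
From mathcomp Require Import all_boot all_order all_algebra.
From mathcomp Require Import all_classical all_reals all_analysis.
From mathcomp Require Import Rstruct Rstruct_topology.
From mathcomp Require Import ring lra.
Set Implicit Arguments. Unset Strict Implicit. Unset Printing Implicit Defensive.
Import Order.TTheory GRing.Theory Num.Theory.
Local Open Scope classical_set_scope.
Local Open Scope ring_scope.

Lemma within_comp {S T U : topologicalType} (A : set S) (B : set T)
  (h : S -> T) (g : T -> U) :
  {within A, continuous h} -> (forall x, A x -> B (h x)) ->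
  {within B, continuous g} -> {within A, continuous (g \o h)}.
Proof.
move=> /continuousP ch hAB /continuousP cg; apply/continuousP => W oW.
have [V oV VB] := (open_subspaceP _ _).1 (cg W oW).
have [V' oV' V'A] := (open_subspaceP _ _).1 (ch V oV).
apply/open_subspaceP; exists V' => //.
rewrite V'A; apply/seteqP; split => x [Hx Ax]; split => //.
- have : (V `&` B) (h x) by split => //; exact: hAB.
  by rewrite VB => -[].
- have : ((g @^-1` W) `&` B) (h x) by split => //; exact: hAB.
  by rewrite -VB => -[].
Qed.

Lemma pasteI {T U : topologicalType} (A B C : set T) (f : T -> U) :
  closed A -> closed B ->
  {within A `&` C, continuous f} -> {within B `&` C, continuous f} ->
  {within (A `|` B) `&` C, continuous f}.
Proof.
move=> cA cB ctsA ctsB; apply/continuous_closedP => W oW.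
case/continuous_closedP/(_ _ oW)/closed_subspaceP: ctsA => V1 cV1 V1W.
case/continuous_closedP/(_ _ oW)/closed_subspaceP: ctsB => V2 cV2 V2W.
apply/closed_subspaceP; exists ((V1 `&` A) `|` (V2 `&` B)).
  by apply: closedU; exact: closedI.
apply/seteqP; split=> t.
- case=> [[[V1t At]|[V2t Bt]] [ABt Ct]]; split => //.
  + have : (V1 `&` (A `&` C)) t by [].
    by rewrite V1W => -[].
  + have : (V2 `&` (B `&` C)) t by [].
    by rewrite V2W => -[].
- case=> ft [[At|Bt] Ct].
  + split; last by split => //; left.
    left; split => //.
    have : ((f @^-1` W) `&` (A `&` C)) t by [].
    by rewrite -V1W => -[].
  + split; last by split => //; right.
    right; split => //.
    have : ((f @^-1` W) `&` (B `&` C)) t by [].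
    by rewrite -V2W => -[].
Qed.

Lemma within_pair {S T U : topologicalType} (A : set S) (f : S -> T) (g : S -> U) :
  {within A, continuous f} -> {within A, continuous g} ->
  {within A, continuous (fun z => (f z, g z))}.
Proof.
move=> cf cg z; apply: cvg_pair; [exact: cf | exact: cg].
Qed.

Lemma cont_snd_aff {X : topologicalType} (a b : RR) :
  continuous (fun z : X * RR => a * z.2 + b).
Proof.
move=> z.
have h1 : (fun z : X * RR => a * z.2) @ z --> a * z.2.
  apply: cvgMl_tmp; exact: cvg_snd.
have := @cvgD _ RR^o _ _ _ _ _ _ _ h1 (cvg_cst (b : RR^o)).
exact.
Qed.

Lemma cont_fst_pair {X : topologicalType} (k : X * RR -> RR) :
  continuous k -> continuous (fun z : X * RR => (z.1, k z)).
Proof.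
move=> ck z.
have h1 : fst @ z --> z.1 by exact: cvg_fst.
have h2 : k @ z --> k z by exact: ck.
have := cvg_pair h1 h2.
exact.
Qed.

Lemma cont_snd {X : topologicalType} : continuous (fun z : X * RR => z.2).
Proof. move=> z; exact: cvg_snd. Qed.

Lemma cont_fst {X : topologicalType} : continuous (fun z : X * (X * X) => z.2.1).
Proof.
move=> z; apply: (@continuous_comp _ _ _ snd fst z).
- exact: cvg_snd.
- exact: cvg_fst.
Qed.

Lemma hom_to_null (X : topologicalType) (x0 : X) (U : set X) :
  homotopic_on U (fun x => (x, x0)) (fun x => (x0, x)) -> incl_nullhomotopic U.
Proof.
move=> [G [cG HG]]; exists x0; exists (fst \o G); split.
- apply: (within_comp (B := setT)) => //.
  apply: continuous_subspaceT => z; exact: cvg_fst.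
- by move=> x Ux; have [/= -> ->] := HG x Ux.
Qed.

Lemma null_to_hom (X : topologicalType) (x0 : X) (U : set X) :
  path_connected X -> incl_nullhomotopic U ->
  homotopic_on U (fun x => (x, x0)) (fun x => (x0, x)).
Proof.
move=> pc [c [H [cH HH]]].
have [p [cp [p0 p1]]] := pc c x0.
pose K := fun z : X * RR =>
  if z.2 <= 2^-1 then H (z.1, 2 * z.2 + 0) else p (2 * z.2 + (-1)).
have cK : {within U `*` unitI, continuous K}.
  have -> : U `*` unitI = ([set z | z.2 <= 2^-1] `|` [set z | 2^-1 <= z.2]) `&` (U `*` unitI).
    apply/seteqP; split => z; last by case.
    move=> Cz; split => //; case: (lerP z.2 2^-1) => h; [left|right] => //; exact: ltW.
  apply: pasteI.
  - have := (continuous_closedP _).1 (@cont_snd X) _ (@closed_le _ (2^-1 : RR)).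
    exact.
  - have := (continuous_closedP _).1 (@cont_snd X) _ (@closed_ge _ (2^-1 : RR)).
    exact.
  - apply: (subspace_eq_continuous (f := H \o (fun z => (z.1, 2 * z.2 + 0)))).
      by move=> z; rewrite inE => -[/= h _]; rewrite /K /from_subspace /= h.
    apply: within_comp; [exact/continuous_subspaceT/cont_fst_pair/cont_snd_aff | | exact: cH].
    move=> [x t] [/= h [/= Ux /andP [t0 t1]]]; split => //=.
    rewrite /unitI /=; apply/andP; split; lra.
  - apply: (subspace_eq_continuous (f := p \o (fun z : X * RR => 2 * z.2 + (-1)))).
      move=> [x t]; rewrite inE => -[/= h [/= Ux _]]; rewrite /K /from_subspace /=; case: ifP => // ht.
      have -> : t = 2^-1 by apply/le_anti; rewrite ht h.
      have -> : 2 * 2^-1 + 0 = 1 :> RR by field.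
      have -> : 2 * 2^-1 + (-1) = 0 :> RR by field.
      by rewrite p0; have [_ ->] := HH x Ux.
    apply: within_comp; [exact/continuous_subspaceT/cont_snd_aff | | exact: cp].
    move=> [x t] [/= h [/= Ux /andP [t0 t1]]].
    rewrite /unitI /=; apply/andP; split; lra.
exists (fun z => (K z, K ((fun z : X * RR => (z.1, -1 * z.2 + 1)) z))); split.
  apply: within_pair => //.
  apply: (within_comp (h := fun z : X * RR => (z.1, -1 * z.2 + 1))) => //.
    exact/continuous_subspaceT/cont_fst_pair/cont_snd_aff.
  move=> [x t] [/= Ux /andP [t0 t1]]; split => //=.
  rewrite /unitI /=; apply/andP; split; lra.
move=> x Ux; rewrite /K /=.
have -> : (0 <= 2^-1 :> RR) = true by apply/idP; lra.
have -> : (-1 * 0 + 1 <= 2^-1 :> RR) = false by apply/negbTE/negP; lra.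
have -> : (1 <= 2^-1 :> RR) = false by apply/negbTE/negP; lra.
have -> : (-1 * 1 + 1 <= 2^-1 :> RR) = true by apply/idP; lra.
have -> : 2 * 0 + 0 = 0 :> RR by ring.
have -> : 2 * (-1 * 0 + 1) + (-1) = 1 :> RR by ring.
have -> : 2 * 1 + (-1) = 1 :> RR by ring.
have -> : 2 * (-1 * 1 + 1) + 0 = 0 :> RR by ring.
by rewrite p1; have [-> _] := HH x Ux.
Qed.

Theorem proposition2p6 (X : topologicalType) (x0 : X) :
  path_connected X ->
  hdist (fun x : X => (x, x0)) (fun x : X => (x0, x)) = LScat X.
Proof.
move=> pc; rewrite /hdist /LScat; congr least_or_inf.
apply: funext => n; congr open_cover_by.
apply: funext => U; apply: propext; split.
- exact: hom_to_null.
- exact: null_to_hom.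
Qed.
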